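(* Let $k$ be a field of characteristic zero, $r\geq1$, $S=k[x_1,x_2,x_3]$, and let $\alpha_1,\alpha_2,\alpha_3$ be the derivations of $S$ given for $k'\in\{1,2,3\}$ by $\alpha_1(x_{k'})=x_{k'}$, $\alpha_2(x_{k'})=x_{k'}(x_{k'}^r-x_1^r)$, $\alpha_3(x_{k'})=x_{k'}(x_{k'}^r-x_1^r)(x_{k'}^r-x_2^r)$, which form an $S$-basis of the Lie–Rinehart algebra $L=\operatorname{Der}\mathcal{A}_r$. In the universal enveloping algebra $U=\mathcal{D}(\mathcal{A}_r)$ of $(S,L)$ define $$u_1=\alpha_3-(x_3^r-x_1^r)\alpha_2+(x_3^r-x_1^r)(x_2^r-x_1^r)\alpha_1,\quad u_2=\alpha_3-(x_3^r-x_2^r)\alpha_2,\quad u_3=\alpha_3.$$ Then $[u_k,x_l]=0$ for all $k,l\in\{1,2,3\}$ with $k\neq l$; in particular $(S,L)$ satisfies the orthogonality condition with the family $(u_1,u_2,u_3)$.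
   Context: $\mathcal{A}_r$ is the hyperplane arrangement in $k^3$ with defining polynomial $x_1x_2x_3(x_2^r-x_1^r)(x_3^r-x_1^r)(x_3^r-x_2^r)$; $\operatorname{Der}\mathcal{A}_r$ is the free $S$-module with basis $\alpha_1,\alpha_2,\alpha_3$ above, a Lie subalgebra of $\operatorname{Der}(S)$, and $\mathcal{D}(\mathcal{A}_r)$ is the subalgebra of $\operatorname{End}_k(S)$ generated by $\operatorname{Der}\mathcal{A}_r$ and multiplications by elements of $S$. In $U$, $[u,x_l]=ux_l-x_lu$. A triangularizable $(S,L)$ with basis $\alpha_1,\ldots,\alpha_n$ satisfies the orthogonality condition if there are $u_1,\ldots,u_n\in U$ of the form $u_k=\alpha_n+\sum_{i=1}^{n-1}f_k^i\alpha_i$ with $f_k^i\in S$ and $[u_k,x_l]=0$ whenever $k\neq l$. *)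

(* Defs.v *)
From HB Require Import structures.
From mathcomp Require Import all_boot all_order all_algebra.
From mathcomp.multinomials Require Import mpoly.
Set Implicit Arguments. Unset Strict Implicit. Unset Printing Implicit Defensive.
Import GRing.Theory.
Local Open Scope ring_scope.

(* S = k[x_1,x_2,x_3]; the variable x_{i+1} is 'X_i with i : 'I_3 (0-based). *)
Definition S (k : fieldType) := {mpoly k[3]}.

Definition xv (k : fieldType) (i : 'I_3) : {mpoly k[3]} := 'X_i.

Definition der_of (k : fieldType) (a : 'I_3 -> {mpoly k[3]})
  (p : {mpoly k[3]}) : {mpoly k[3]} :=
  \sum_(i < 3) a i * mderiv i p.

Definition alpha (k : fieldType) (r : nat) (j : 'I_3) : {mpoly k[3]} -> {mpoly k[3]} :=
  let x := @xv k in
  let x1 := x (inord 0) in let x2 := x (inord 1) in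
  der_of (fun i : 'I_3 =>
    if j == inord 0 then x i
    else if j == inord 1 then x i * (x i ^+ r - x1 ^+ r)
    else x i * (x i ^+ r - x1 ^+ r) * (x i ^+ r - x2 ^+ r)).

Arguments alpha : clear implicits.

(* Elements of U = D(A_r) as k-linear endomorphisms of S; multiplication by f *)
Definition mulop (k : fieldType) (f : {mpoly k[3]}) : {mpoly k[3]} -> {mpoly k[3]} :=
  fun p => f * p.

Definition commx (k : fieldType) (u : {mpoly k[3]} -> {mpoly k[3]}) (l : 'I_3)
  : {mpoly k[3]} -> {mpoly k[3]} :=
  fun p => u (@xv k l * p) - @xv k l * u p.

Definition ufam (k : fieldType) (r : nat) (m : 'I_3) : {mpoly k[3]} -> {mpoly k[3]} :=
  let x := @xv k in
  let x1 := x (inord 0) in let x2 := x (inord 1) in let x3 := x (inord 2) in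
  let a := alpha k r in
  if m == inord 0 then
    fun p => a (inord 2) p - (x3 ^+ r - x1 ^+ r) * a (inord 1) p
             + (x3 ^+ r - x1 ^+ r) * (x2 ^+ r - x1 ^+ r) * a (inord 0) p
  else if m == inord 1 then
    fun p => a (inord 2) p - (x3 ^+ r - x2 ^+ r) * a (inord 1) p
  else a (inord 2).

Arguments ufam : clear implicits.

Definition orthogonality_with (k : fieldType)
  (alp : 'I_3 -> {mpoly k[3]} -> {mpoly k[3]})
  (u : 'I_3 -> {mpoly k[3]} -> {mpoly k[3]}) : Prop :=
  (exists f : 'I_3 -> 'I_2 -> {mpoly k[3]},
     forall m p, u m p = alp (inord 2) p + \sum_(i < 2) f m i * alp (widen_ord (leqnSn 2) i) p)
  /\ (forall m l : 'I_3, m != l -> forall p, commx (u m) l p = 0).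

(* Main.v *)
Require Import Defs.
From HB Require Import structures.
From mathcomp Require Import all_boot all_order all_algebra.
From mathcomp.multinomials Require Import mpoly.
From mathcomp Require Import ring.
Local Open Scope ring_scope.
Import GRing.Theory.

Lemma mderivX1 (k : fieldType) (i l : 'I_3) :
  mderiv i ('X_l : {mpoly k[3]}) = (l == i)%:R.
Proof.
rewrite mderivX mnm1E; case: eqP => [->|_]; last by rewrite scale0r.
have -> : (U_(i) - U_(i) = 0)%MM by apply/mnmP => j; rewrite mnmBE subnn mnm0E.
by rewrite mpolyX0 scale1r.
Qed.

Lemma der_ofXM (k : fieldType) a (l : 'I_3) (p : {mpoly k[3]}) :
  der_of a (xv k l * p) = a l * p + xv k l * der_of a p.
Proof.
rewrite /der_of /xv.
under eq_bigr => i _ do rewrite mderivM mderivX1 mulrDr mulrA.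
rewrite big_split /= mulr_sumr; congr (_ + _); last first.
  by apply: eq_bigr => i _; rewrite -mulrA mulrCA.
rewrite (bigD1 l) //= eqxx mul1r big1 ?addr0 // => i /negPf.
by rewrite eq_sym => ->; rewrite mul0r mulr0.
Qed.

Lemma ord3 (l : 'I_3) : l = inord 0 \/ l = inord 1 \/ l = inord 2.
Proof.
case: l => [[|[|[|m]]] Hm] //.
- by left; apply: val_inj; rewrite /= inordK.
- by right; left; apply: val_inj; rewrite /= inordK.
- by right; right; apply: val_inj; rewrite /= inordK.
Qed.

Lemma inord_eq (i j : nat) : (i < 3)%N -> (j < 3)%N ->
  ((inord i : 'I_3) == inord j) = (i == j).
Proof. by move=> hi hj; rewrite -val_eqE /= !inordK. Qed.

Theorem proposition1p24 (k : fieldType) (hchar : [pchar k] =i pred0)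
  (r : nat) (hr : (1 <= r)%N) :
  (forall m l : 'I_3, m != l -> forall p : {mpoly k[3]},
      commx (ufam k r m) l p = 0)
  /\ orthogonality_with (alpha k r) (ufam k r).
Proof.
have comm : forall m l : 'I_3, m != l -> forall p : {mpoly k[3]},
      commx (ufam k r m) l p = 0.
  move=> m l; case: (ord3 m) => [|[|]] ->; case: (ord3 l) => [|[|]] ->;
    rewrite ?inord_eq // => _ p;
    rewrite /commx /ufam /alpha ?inord_eq //= !der_ofXM ?inord_eq //=; ring.
split => //; split => //.
exists (fun m i =>
  let x1 := xv k (inord 0) in let x2 := xv k (inord 1) in let x3 := xv k (inord 2) in
  if m == inord 0 then (if i == ord0 then (x3 ^+ r - x1 ^+ r) * (x2 ^+ r - x1 ^+ r)
                        else - (x3 ^+ r - x1 ^+ r))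
  else if m == inord 1 then (if i == ord0 then 0 else - (x3 ^+ r - x2 ^+ r))
  else 0).
move=> m p; rewrite big_ord_recr big_ord1 /=.
have -> : widen_ord (m:=3) (leqnSn 2) (widen_ord (m:=2) (leqnSn 1) ord0) = inord 0 by apply: val_inj; rewrite /= inordK.
have -> : widen_ord (m:=3) (leqnSn 2) (@ord_max 1) = inord 1 by apply: val_inj; rewrite /= inordK.
case: (ord3 m) => [|[|]] ->; rewrite /ufam ?inord_eq //=; ring.
Qed.
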